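(* Let $n \leq 9$ and let $G$ be a connected $n$-vertex graph that is not isomorphic to any graph in $\mathcal{E}_4 = \{C_4, C_4', K_4, G_1, G_2, G_3, G_4, G_5, G_6\}$. Then $\iota(G, C_4) \leq 1$.
   Context: All graphs are finite and simple. For $D \subseteq V(G)$, $N[D]$ is the closed neighbourhood of $D$ and $G - N[D]$ the subgraph induced by $V(G)\setminus N[D]$. A set $D \subseteq V(G)$ is a $C_4$-isolating set of $G$ if $G - N[D]$ contains no subgraph isomorphic to the $4$-cycle $C_4$; $\iota(G, C_4)$ is the minimum size of such a set. $C_4'$ is the diamond graph on $\{1,2,3,4\}$ with edges $12,23,34,41,13$. The graphs $G_1,\dots,G_6$ all have vertex set $\{1,\dots,9\}$ and edge sets: $G_1$: all pairs $\{i,j\}$ with $j-i \equiv \pm1$ or $\pm 2 \pmod 9$; $G_2$: $56,58,59,54,61,67,68,12,17,19,23,28,29,34,37,38,47,49$; $G_3$: $56,57,58,54,67,68,61,71,74,82,83,43,49,12,19,23,29,39$; $G_4$: $12,13,14,15,23,26,27,36,37,45,48,49,58,59,67,69,78,89$; $G_5$: the edges of $G_4$ except $23$; $G_6$: the edges of $G_4$ except $23$ and $45$. *)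

(* Defs.v *)
From mathcomp Require Import all_boot.
Set Implicit Arguments. Unset Strict Implicit. Unset Printing Implicit Defensive.

(* A finite simple graph: a vertex finType T with an adjacency relation e,
   assumed symmetric and irreflexive (hypotheses in the theorem). *)

Definition closed_nbhd (T : finType) (e : rel T) (D : {set T}) : {set T} :=
  D :|: [set x | [exists y in D, e y x]].

Definition has_C4_outside (T : finType) (e : rel T) (D : {set T}) : Prop :=
  exists a b c d : T,
    [/\ uniq [:: a; b; c; d],
        all (fun v => v \notin closed_nbhd e D) [:: a; b; c; d] &
        [&& e a b, e b c, e c d & e d a]].

Definition C4_isolating (T : finType) (e : rel T) (D : {set T}) : Prop :=
  ~ has_C4_outside e D.

Definition iota_C4_le (T : finType) (e : rel T) (k : nat) : Prop :=
  exists D : {set T}, #|D| <= k /\ C4_isolating e D.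

Definition connected_graph (T : finType) (e : rel T) : Prop :=
  forall x y : T, connect e x y.

Definition graph_iso (T T' : finType) (e : rel T) (e' : rel T') : Prop :=
  exists f : T -> T', bijective f /\ forall x y, e' (f x) (f y) = e x y.

(* graph on 'I_k whose vertices are labelled 1..k, edges given as a list *)
Definition graph_of_edges (k : nat) (s : seq (nat * nat)) : rel 'I_k :=
  fun i j => ((i.+1, j.+1) \in s) || ((j.+1, i.+1) \in s).
Arguments graph_of_edges : clear implicits.

Definition C4g : rel 'I_4 := graph_of_edges 4 [:: (1,2); (2,3); (3,4); (4,1)].
Definition C4'g : rel 'I_4 := graph_of_edges 4 [:: (1,2); (2,3); (3,4); (4,1); (1,3)].
Definition K4g : rel 'I_4 := fun i j => i != j.

(* G1: {i,j} an edge iff j - i = +-1 or +-2 mod 9 *)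
Definition G1g : rel 'I_9 :=
  fun i j => ((j + 9 - i) %% 9) \in [:: 1; 2; 7; 8].

Definition G2g : rel 'I_9 := graph_of_edges 9
  [:: (5,6); (5,8); (5,9); (5,4); (6,1); (6,7); (6,8); (1,2); (1,7); (1,9);
      (2,3); (2,8); (2,9); (3,4); (3,7); (3,8); (4,7); (4,9)].
Definition G3g : rel 'I_9 := graph_of_edges 9
  [:: (5,6); (5,7); (5,8); (5,4); (6,7); (6,8); (6,1); (7,1); (7,4); (8,2);
      (8,3); (4,3); (4,9); (1,2); (1,9); (2,3); (2,9); (3,9)].
Definition G4_edges : seq (nat * nat) :=
  [:: (1,2); (1,3); (1,4); (1,5); (2,3); (2,6); (2,7); (3,6); (3,7); (4,5);
      (4,8); (4,9); (5,8); (5,9); (6,7); (6,9); (7,8); (8,9)].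
Definition G4g : rel 'I_9 := graph_of_edges 9 G4_edges.
Definition G5g : rel 'I_9 :=
  graph_of_edges 9 [seq p <- G4_edges | p != (2,3)].
Definition G6g : rel 'I_9 :=
  graph_of_edges 9 [seq p <- G4_edges | (p != (2,3)) && (p != (4,5))].

Definition in_E4 (T : finType) (e : rel T) : Prop :=
  graph_iso e C4g \/ graph_iso e C4'g \/ graph_iso e K4g \/
  graph_iso e G1g \/ graph_iso e G2g \/ graph_iso e G3g \/
  graph_iso e G4g \/ graph_iso e G5g \/ graph_iso e G6g.

(* Main.v *)
Require Import Defs.
From mathcomp Require Import all_boot.
From Stdlib Require Import Classical.
(* Proof by certified exhaustive search (computational reflection). *)
Set Implicit Arguments. Unset Strict Implicit. Unset Printing Implicit Defensive.

Definition mat := seq (seq (option bool)).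
Definition look (M : mat) (i j : nat) : option bool := nth None (nth [::] M i) j.
Definition upd1 (M : mat) i j b : mat :=
  set_nth [::] M i (set_nth None (nth [::] M i) j (Some b)).
Definition upd (M : mat) i j b : mat := upd1 (upd1 M i j b) j i b.

Fixpoint lhas (p : nat -> bool) (l : seq nat) : bool :=
  match l with [::] => false | x :: r => if p x then true else lhas p r end.
Fixpoint lall (p : nat -> bool) (l : seq nat) : bool :=
  match l with [::] => true | x :: r => if p x then lall p r else false end.

Definition hasC4b (n : nat) (S : nat -> bool) (E : nat -> nat -> bool) : bool :=
  let l := iota 0 n in
  lhas (fun a => if S a then lhas (fun c => if a < c then (if S c then
     1 < count (fun b => if S b then (if b != a then (if b != c then (if E a b then E b c else false) else false) else false) else false) l
     else false) else false) l else false) l.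

Definition ga (A : seq (seq bool)) (i j : nat) : bool := nth false (nth [::] A i) j.
Definition mkm n (f : nat -> nat -> bool) := [seq [seq f i j | j <- iota 0 n] | i <- iota 0 n].

Definition prune n (M : mat) : bool :=
  lhas (fun v => ~~ hasC4b n (fun x => if x != v then look M v x != Some true else false)
                            (fun i j => if look M i j != Some false then look M j i != Some false else false)) (iota 0 n).


Definition gr (M : mat) (i j : nat) : bool := (i != j) && (look M i j == Some true).

Definition complete n (M : mat) : bool :=
  all (fun i => all (fun j => (i == j) || (look M i j != None)) (iota 0 n)) (iota 0 n).

Definition reach_step n (g : nat -> nat -> bool) (R : seq bool) : seq bool :=
  [seq (nth false R k) || has (fun i => nth false R i && g i k) (iota 0 n) | k <- iota 0 n].
Definition reach n g : seq bool := iter n (reach_step n g) [seq k == 0 | k <- iota 0 n].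
Definition disconb n g : bool :=
  let R := reach n g in
  [&& nth false R 0, has (fun j => ~~ nth false R j) (iota 0 n) &
      all (fun i => nth false R i ==> all (fun k => g i k ==> nth false R k) (iota 0 n)) (iota 0 n)].

Definition gedges (s : seq (nat * nat)) (i j : nat) : bool :=
  ((i.+1, j.+1) \in s) || ((j.+1, i.+1) \in s).
Definition G1n (i j : nat) : bool := ((j + 9 - i) %% 9) \in [:: 1; 2; 7; 8].
Definition L2 := [:: (5,6); (5,8); (5,9); (5,4); (6,1); (6,7); (6,8); (1,2); (1,7); (1,9);
      (2,3); (2,8); (2,9); (3,4); (3,7); (3,8); (4,7); (4,9)].
Definition L3 := [:: (5,6); (5,7); (5,8); (5,4); (6,7); (6,8); (6,1); (7,1); (7,4); (8,2);
      (8,3); (4,3); (4,9); (1,2); (1,9); (2,3); (2,9); (3,9)].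
Definition Gnat (k : nat) : nat -> nat -> bool :=
  match k with
  | 1 => G1n
  | 2 => gedges L2
  | 3 => gedges L3
  | 4 => gedges G4_edges
  | 5 => gedges [seq p <- G4_edges | p != (2,3)]
  | _ => gedges [seq p <- G4_edges | (p != (2,3)) && (p != (4,5))]
  end.

Fixpoint first_some (F : nat -> option (seq nat)) (l : seq nat) : option (seq nat) :=
  match l with [::] => None | y :: r => match F y with Some z => Some z | None => first_some F r end end.

Definition deg (g : nat -> nat -> bool) x := count (g x) (iota 0 9).

Definition vtri (g : nat -> nat -> bool) v :=
  sumn [seq count (fun y => g v x && g v y && g x y) (iota 0 9) | x <- iota 0 9].
Definition ttri (g : nat -> nat -> bool) := sumn [seq vtri g v | v <- iota 0 9].

Fixpoint ext (g H : nat -> nat -> bool) (fuel : nat) (f : seq nat) : option (seq nat) :=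
  match fuel with
  | 0 => Some f
  | fu.+1 => let k := size f in
     first_some (fun y => if y \in f then None else if deg g k != deg H y then None else if vtri g k != vtri H y then None else
                         if lall (fun i => g i k == H (nth 0 f i) y) (iota 0 k)
                          then ext g H fu (rcons f y) else None) (iota 0 9)
  end.

Definition isiso_check (g H : nat -> nat -> bool) (f : seq nat) : bool :=
  [&& uniq f, size f == 9, all (fun y => y < 9) f &
      all (fun i => all (fun j => g i j == H (nth 0 f i) (nth 0 f j)) (iota 0 9)) (iota 0 9)].

Definition Hms : seq (seq (seq bool)) := [:: [:: [:: false; true; true; false; false; false; false; true; true]; [:: true; false; true; true; false; false; false; false; true]; [:: true; true; false; true; true; false; false; false; false]; [:: false; true; true; false; true; true; false; false; false]; [:: false; false; true; true; false; true; true; false; false]; [:: false; false; false; true; true; false; true; true; false]; [:: false; false; false; false; true; true; false; true; true]; [:: true; false; false; false; false; true; true; false; true]; [:: true; true; false; false; false; false; true; true; false]]; [:: [:: false; true; false; false; false; true; true; false; true]; [:: true; false; true; false; false; false; false; true; true]; [:: false; true; false; true; false; false; true; true; false]; [:: false; false; true; false; true; false; true; false; true]; [:: false; false; false; true; false; true; false; true; true]; [:: true; false; false; false; true; false; true; true; false]; [:: true; false; true; true; false; true; false; false; false]; [:: false; true; true; false; true; true; false; false; false]; [:: true; true; false; true; true; false; false; false; false]]; [:: [:: false; true; false; false; false; true; true; false; true]; [:: true; false; true; false; false; false; false; true; true]; [:: false; true; false; true; false; false; false; true; true]; [:: false; false; true; false; true; false; true; false; true]; [:: false; false; false; true; false;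 true; true; true; false]; [:: true; false; false; false; true; false; true; true; false]; [:: true; false; false; true; true; true; false; false; false]; [:: false; true; true; false; true; true; false; false; false]; [:: true; true; true; true; false; false; false; false; false]]; [:: [:: false; true; true; true; true; false; false; false; false]; [:: true; false; true; false; false; true; true; false; false]; [:: true; true; false; false; false; true; true; false; false]; [:: true; false; false; false; true; false; false; true; true]; [:: true; false; false; true; false; false; false; true; true]; [:: false; true; true; false; false; false; true; false; true]; [:: false; true; true; false; false; true; false; true; false]; [:: false; false; false; true; true; false; true; false; true]; [:: false; false; false; true; true; true; false; true; false]]; [:: [:: false; true; true; true; true; false; false; false; false]; [:: true; false; false; false; false; true; true; false; false]; [:: true; false; false; false; false; true; true; false; false]; [:: true; false; false; false; true; false; false; true; true]; [:: true; false; false; true; false; false; false; true; true]; [:: false; true; true; false; false; false; true; false; true]; [:: false; true; true; false; false; true; false; true; false]; [:: false; false; false; true; true; false; true; false; true]; [:: false; false; false; true; true; true; false; true; false]]; [:: [:: false; true; true; true; true; false; false; false; false]; [:: true; false; false; false; false; true; true; false; false]; [:: true; false; false; false; false; true; true; false; false]; [:: true; false; false; false; false; false; false; true; true]; [:: true; false; false; false; false; false; false; true; true]; [:: false; true; true; false; false; false; true; false; true]; [:: false; true; true; false; false; true; false; true; false]; [:: false; false; false; true; true; false; true; false; true]; [:: false; false; false; true; true; true; false; true; false]]].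
Definition Hm (k : nat) := ga (nth [::] Hms k.-1).
Definition ttris := [:: 54; 36; 48; 60; 42; 24].

Definition isob n g : bool :=
  if n != 9 then false else let t := ttri g in
  lhas (fun k => if t != nth 0 ttris k.-1 then false else
                 match ext g (Hm k) 9 [::] with
                 | Some f => isiso_check g (Hm k) f | None => false end) [:: 1; 2; 3; 4; 5; 6].


Definition leaf n (M : mat) : bool :=
  if complete n M then
    let A := mkm n (gr M) in
    if disconb n (ga A) then true else isob n (ga A)
  else false.

Fixpoint search n (M : mat) (ord : seq (nat * nat)) : bool :=
  if prune n M then true else match ord with
               | [::] => leaf n M
               | p :: r => if search n (upd M p.1 p.2 true) r then search n (upd M p.1 p.2 false) r else false
               end.

Definition fixedl : seq (nat * nat * bool) :=
  [:: (0,1,false); (0,2,false); (0,3,false); (0,4,false);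
      (1,2,true); (2,3,true); (3,4,true); (1,4,true)].
Definition M0 : mat := foldr (fun t M => upd M t.1.1 t.1.2 t.2) [::] fixedl.
Definition pord n : seq (nat * nat) :=
  [seq p <- [seq (i, j) | i <- iota 0 n, j <- iota 0 n] | (p.1 < p.2) && (look M0 p.1 p.2 == None)].
Definition runs n := search n M0 (pord n).

Lemma lhasE p l : lhas p l = has p l.
Proof. by elim: l => //= x l ->; case: (p x). Qed.

Lemma lallE p l : lall p l = all p l.
Proof. by elim: l => //= x l ->; case: (p x). Qed.

Definition C4P n (S : nat -> bool) (E : nat -> nat -> bool) :=
  exists a b c d, [/\ a < n, b < n, c < n & d < n] /\
    [&& a != b, a != c, a != d, b != c, b != d & c != d] /\
    [/\ S a, S b, S c & S d] /\ [/\ E a b, E b c, E c d & E d a].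

Lemma count2 (p : pred nat) l x y : uniq l -> x \in l -> y \in l -> x != y -> p x -> p y -> 1 < count p l.
Proof.
elim: l => //= z l IH /andP[zl ul]; rewrite !in_cons.
case: (eqVneq x z) => [<- | xz] /=.
  case: (eqVneq y x) => [-> | yx] //=.
  move=> _ yl _ -> py; rewrite add1n ltnS -has_count; apply/hasP; by exists y.
case: (eqVneq y z) => [<- | yz] /= xl.
  move=> _ _ px ->; rewrite add1n ltnS -has_count; apply/hasP; by exists x.
move=> yl xy px py; have := IH ul xl yl xy px py; case: (p z) => //= h; exact: ltnW.
Qed.

Lemma C4P_b n (S : nat -> bool) (E : nat -> nat -> bool) : (forall x y, E x y -> E y x) -> C4P n S E -> hasC4b n S E.
Proof.
move=> Esym.
have key : forall a b c d, a < c -> [/\ a < n, b < n, c < n & d < n] ->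
    [&& a != b, a != c, a != d, b != c, b != d & c != d] ->
    [/\ S a, S b, S c & S d] -> [/\ E a b, E b c, E c d & E d a] -> hasC4b n S E.
  move=> a b c d ac [an bn cn dn] /and5P[ab ac' ad bc /andP[bd cd]] [Sa Sb Sc Sd] [Eab Ebc Ecd Eda].
  rewrite /hasC4b lhasE; apply/hasP; exists a; first by rewrite mem_iota.
  rewrite Sa lhasE; apply/hasP; exists c; first by rewrite mem_iota.
  rewrite ac Sc.
  apply: (@count2 _ _ b d).
  - exact: iota_uniq.
  - by rewrite mem_iota.
  - by rewrite mem_iota.
  - exact: bd.
  - by rewrite /= Sb (eq_sym b a) ab bc Eab Ebc.
  - by rewrite /= Sd (eq_sym d a) ad (eq_sym d c) cd (Esym _ _ Eda) (Esym _ _ Ecd).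
move=> [a [b [c [d [R [D [SS EE]]]]]]].
move/and5P: D => [ab ac ad bc /andP[bd cd]].
case: (ltngtP a c) => [lt|lt|eq]; last by rewrite eq eqxx in ac.
  by apply: (key a b c d) => //; rewrite ab ac ad bc bd cd.
case: R => an bn cn dn; case: SS => Sa Sb Sc Sd; case: EE => Eab Ebc Ecd Eda.
apply: (key c d a b) => //; by rewrite cd (eq_sym c a) ac (eq_sym c b) bc (eq_sym d a) ad (eq_sym d b) bd ab.
Qed.

Lemma C4P_mono n (S S' : nat -> bool) (E E' : nat -> nat -> bool) : C4P n S E -> (forall x, x < n -> S x -> S' x) ->
  (forall x y, E x y -> E' x y) -> C4P n S' E'.
Proof.
move=> [a [b [c [d [[an bn cn dn] [D [[Sa Sb Sc Sd] [Eab Ebc Ecd Eda]]]]]]]] HS HE.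
exists a, b, c, d; split => //; split => //; split; split; by auto.
Qed.

Definition consM (g : nat -> nat -> bool) (M : mat) := forall i j b, look M i j = Some b -> g i j = b.

Definition Good1 n (g : nat -> nat -> bool) :=
  exists2 v, v < n & ~ C4P n (fun x => (x != v) && ~~ g v x) g.

Lemma prune_sound n M g : (forall x y, g x y = g y x) -> consM g M -> prune n M -> Good1 n g.
Proof.
move=> gs cM; rewrite /prune lhasE => /hasP [v]; rewrite mem_iota /= => vn nC.
exists v => // HC; move/negP: nC; apply; apply: C4P_b.
  by move=> x y; case: (look M x y != Some false); case: (look M y x != Some false).
apply: (C4P_mono HC).
  move=> x _ /andP[xv ngx]; rewrite xv; apply/eqP => h; move: (cM _ _ _ h); by rewrite (negbTE ngx).
move=> x y gxy; apply/andP; split; apply/eqP => h; move: (cM _ _ _ h).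
  by rewrite gxy.
by rewrite gs gxy.
Qed.

Lemma look_upd1 M i j b x y : look (upd1 M i j b) x y = if (x == i) && (y == j) then Some b else look M x y.
Proof.
rewrite /look /upd1 nth_set_nth /=; case: (eqVneq x i) => [-> | //] /=.
by rewrite nth_set_nth /=; case: (eqVneq y j).
Qed.

Lemma look_upd M i j b x y : look (upd M i j b) x y =
  if ((x == j) && (y == i)) || ((x == i) && (y == j)) then Some b else look M x y.
Proof. rewrite /upd look_upd1 look_upd1; by case: ((x == j) && (y == i)). Qed.

Lemma cons_upd g M i j b : (forall x y, g x y = g y x) -> consM g M -> g i j = b -> consM g (upd M i j b).
Proof.
move=> gs cM gij x y b'; rewrite look_upd.
case: ifP => [/orP[/andP[/eqP-> /eqP->]|/andP[/eqP-> /eqP->]] [<-] | _ /cM //]; by rewrite // gs.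
Qed.

Definition DisconP n (g : nat -> nat -> bool) :=
  exists S : nat -> bool, [/\ S 0, exists2 j, j < n & ~~ S j &
     forall i k, i < n -> k < n -> S i -> g i k -> S k].

Definition IsoP n (g : nat -> nat -> bool) :=
  n = 9 /\ exists2 k, k \in [:: 1; 2; 3; 4; 5; 6] & exists f : seq nat,
    [/\ uniq f, size f = 9, all (fun y => y < 9) f &
        forall i j, i < 9 -> j < 9 -> g i j = Gnat k (nth 0 f i) (nth 0 f j)].

Definition GoalP n g := Good1 n g \/ DisconP n g \/ IsoP n g.

Lemma DisconP_ext n g h : (forall i j, i < n -> j < n -> g i j = h i j) -> DisconP n h -> DisconP n g.
Proof.
move=> gh [S [S0 Sj Scl]]; exists S; split => // i k ir kn Si; rewrite gh //; exact: Scl.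
Qed.

Lemma IsoP_ext n g h : (forall i j, i < n -> j < n -> g i j = h i j) -> IsoP n h -> IsoP n g.
Proof.
move=> gh [n9 [k kin [f [uf sf af hf]]]]; split => //; exists k => //; exists f; split => //.
move=> i j i9 j9; rewrite gh ?n9 //; exact: hf.
Qed.

Lemma disconb_sound n g : disconb n g -> DisconP n g.
Proof.
rewrite /disconb => /and3P [h0 /hasP [j]]; rewrite mem_iota /= => jn nj /allP cl.
exists (fun x => nth false (reach n g) x); split => //; first by exists j.
move=> i k ir kn Si gik.
have := cl i; rewrite mem_iota /= ir => /(_ isT); rewrite Si /= => /allP /(_ k).
by rewrite mem_iota /= kn gik => /(_ isT).
Qed.

Lemma Hm_Gnat : all (fun k => all (fun i => all (fun j => Hm k i j == Gnat k i j) (iota 0 9)) (iota 0 9)) [:: 1; 2; 3; 4; 5; 6].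
Proof. vm_compute. reflexivity. Qed.

Lemma isob_sound n g : isob n g -> IsoP n g.
Proof.
rewrite /isob; case: (eqVneq n 9) => [n9|]; last by [].
rewrite lhasE => /hasP [k kin].
case: ifP => // _.
case: (ext g (Hm k) 9 [::]) => // f /and4P [uf /eqP sf af /allP hf].
split => //; exists k => //; exists f; split => // i j i9 j9.
have /allP := (allP Hm_Gnat k kin) => /(_ (nth 0 f i)).
have fi : nth 0 f i < 9 by apply: (allP af); rewrite mem_nth // sf.
have fj : nth 0 f j < 9 by apply: (allP af); rewrite mem_nth // sf.
rewrite mem_iota fi => /(_ isT) /allP /(_ (nth 0 f j)); rewrite mem_iota fj => /(_ isT) /eqP <-.
have := hf i; rewrite mem_iota i9 => /(_ isT) /allP /(_ j); rewrite mem_iota j9 => /(_ isT) /eqP.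
done.
Qed.

Lemma ga_mkm n f i j : i < n -> j < n -> ga (mkm n f) i j = f i j.
Proof.
move=> i_n j_n; rewrite /ga /mkm (nth_map 0) ?size_iota // nth_iota // (nth_map 0) ?size_iota //.
by rewrite nth_iota.
Qed.

Lemma leaf_sound n M g : (forall x, g x x = false) -> consM g M -> leaf n M -> GoalP n g.
Proof.
move=> girr cM; rewrite /leaf; case: ifP => // /allP comp.
have E : forall i j, i < n -> j < n -> g i j = ga (mkm n (gr M)) i j.
  move=> i j i_n j_n; rewrite ga_mkm // /gr.
  case: (eqVneq i j) => [-> | ij] /=; first by rewrite girr.
  have := comp i; rewrite mem_iota /= i_n => /(_ isT) /allP /(_ j); rewrite mem_iota /= j_n => /(_ isT).
  rewrite (negbTE ij) /=; case h: (look M i j) => [b|] //= _.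
  by rewrite (cM _ _ _ h); case: b {h}.
case: ifP => [/disconb_sound D _ | _ /isob_sound I].
  by right; left; exact: DisconP_ext E D.
by right; right; exact: IsoP_ext E I.
Qed.

Lemma search_sound n ord : forall M, search n M ord -> forall g, (forall x y, g x y = g y x) ->
  (forall x, g x x = false) -> consM g M -> GoalP n g.
Proof.
elim: ord => [|p r IH] M /=; case: ifP => [pr _ g gs gi cM | _].
- by left; exact: prune_sound gs cM pr.
- move=> lf g gs gi cM; exact: leaf_sound gi cM lf.
- by left; exact: prune_sound gs cM pr.
case: ifP => // h1 h2 g gs gi cM.
case gp: (g p.1 p.2).
  by apply: (IH _ h1) => //; apply: cons_upd.
by apply: (IH _ h2) => //; apply: cons_upd.
Qed.

Lemma cons_nil g : consM g [::].
Proof. by move=> i j b; rewrite /look !nth_nil. Qed.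

Lemma cons_M0 g : (forall x y, g x y = g y x) -> all (fun t => g t.1.1 t.1.2 == t.2) fixedl -> consM g M0.
Proof.
rewrite /M0; elim: fixedl => [|t l IH] gs /=; first by move=> _; exact: cons_nil.
move=> /andP [/eqP ht hl]; apply: cons_upd => //; exact: IH.
Qed.

Lemma cons_M0' g : (forall x y, g x y = g y x) ->
  g 0 1 = false -> g 0 2 = false -> g 0 3 = false -> g 0 4 = false ->
  g 1 2 = true -> g 2 3 = true -> g 3 4 = true -> g 1 4 = true -> consM g M0.
Proof.
move=> gs h1 h2 h3 h4 h5 h6 h7 h8; apply: cons_M0; first exact: gs.
by rewrite /fixedl /all h1 h2 h3 h4 h5 h6 h7 h8.
Qed.

Lemma in_cnbhd (T : finType) (e : rel T) w x : (x \in closed_nbhd e [set w]) = (x == w) || e w x.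
Proof.
rewrite /closed_nbhd in_setU in_set1 in_set; congr (_ || _).
apply/existsP/idP => [[y /andP [/set1P -> //]] | h]; by exists w; rewrite in_set1 eqxx.
Qed.

Lemma runs_ok : all runs (iota 5 5).
Proof. vm_compute. reflexivity. Qed.

Unset Implicit Arguments.

Theorem lemma5 (T : finType) (e : rel T) :
  symmetric e -> irreflexive e ->
  #|T| <= 9 ->
  connected_graph e ->
  ~ in_E4 e ->
  iota_C4_le e 1.
Proof.
move=> esy eirr card9 conn nE4.
apply: NNPP => Hn.
have H : forall D : {set T}, #|D| <= 1 -> has_C4_outside e D.
  move=> D hD; apply: NNPP => hc; apply: Hn; exists D; split => //.
clear Hn.
have nE4' : in_E4 e -> False := nE4.
clear nE4.
have H1 : forall w, has_C4_outside e [set w] by move=> w; apply: H; rewrite cards1.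
have [v _] : has_C4_outside e set0 by apply: H; rewrite cards0.
have [a [b [c [d [u out ed]]]]] : has_C4_outside e [set v] by apply: H; rewrite cards1.
move: out => /and5P [oa ob oc od _].
rewrite !in_cnbhd !negb_or in oa ob oc od.
move: oa ob oc od => /andP [av nva] /andP [bv nvb] /andP [cv nvc] /andP [dv nvd].
move: ed => /and4P [eab ebc ecd eda].
set l5 := [:: v; a; b; c; d].
set s := l5 ++ [seq x <- enum T | x \notin l5].
have us : uniq s.
  rewrite cat_uniq filter_uniq ?enum_uniq // andbT; apply/andP; split.
    rewrite /l5 cons_uniq u andbT !inE negb_or !(eq_sym v) av negb_or bv negb_or cv dv //.
  by apply/hasPn => x; rewrite mem_filter => /andP [].
have n5 : 5 <= size s by rewrite size_cat.
have ms : forall x, x \in s.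
  by move=> x; rewrite mem_cat mem_filter mem_enum andbT; case: (x \in l5).
have cardn : #|T| = size s.
  rewrite cardT; apply/esym/perm_size/uniq_perm => //; first exact: enum_uniq.
  by move=> x; rewrite mem_enum ms.
have s0 : nth v s 0 = v by [].
have s1 : nth v s 1 = a by [].
have s2 : nth v s 2 = b by [].
have s3 : nth v s 3 = c by [].
have s4 : nth v s 4 = d by [].
have iv : index v s = 0 by rewrite /s /l5 /= eqxx.
clearbody s; clear l5.
have [n ns] : exists n, size s = n by exists (size s).
rewrite ns in cardn n5.
pose g := fun i j => e (nth v s i) (nth v s j).
have gE : forall i j, g i j = e (nth v s i) (nth v s j) by [].
clearbody g.
have gsym : forall x y, g x y = g y x by move=> x y; rewrite !gE esy.
have girr : forall x, g x x = false by move=> x; rewrite gE eirr.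
have gidx : forall x y, g (index x s) (index y s) = e x y.
  by move=> x y; rewrite gE !nth_index.
have idx_inj : forall x y, (index x s == index y s) = (x == y).
  move=> x y; apply/eqP/eqP => [h|-> //].
  by rewrite -(nth_index v (ms x)) h nth_index.
have idxn : forall x, index x s < n by move=> x; rewrite -ns index_mem.

have n9' : n <= 9 by rewrite -cardn.
have nin : n \in iota 5 5 by rewrite mem_iota n5 andTb; exact: n9'.
have cM : consM g M0.
  have g01 : g 0 1 = false by rewrite gE s0 s1; exact: negbTE nva.
  have g02 : g 0 2 = false by rewrite gE s0 s2; exact: negbTE nvb.
  have g03 : g 0 3 = false by rewrite gE s0 s3; exact: negbTE nvc.
  have g04 : g 0 4 = false by rewrite gE s0 s4; exact: negbTE nvd.
  have g12 : g 1 2 = true by rewrite gE s1 s2; exact: eab.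
  have g23 : g 2 3 = true by rewrite gE s2 s3; exact: ebc.
  have g34 : g 3 4 = true by rewrite gE s3 s4; exact: ecd.
  have g14 : g 1 4 = true by rewrite gE s1 s4 esy; exact: eda.
  exact: (cons_M0' gsym g01 g02 g03 g04 g12 g23 g34 g14).
have [G1|[GD|GI]] := search_sound (allP runs_ok n nin) gsym girr cM.
- case: G1 => v0 v0n; apply.
  have [w wE] : exists w, w = nth v s v0 by exists (nth v s v0).
  have [a1 [b1 [c1 [d1 [u1 out1 ed1]]]]] := H1 w.
  have Sx : forall x, x \notin closed_nbhd e [set w] -> (index x s != v0) && ~~ g v0 (index x s).
    move=> x; rewrite in_cnbhd negb_or => /andP [xw nwx]; apply/andP; split.
      apply: contra xw => /eqP ie; rewrite wE -ie (nth_index v (ms x)); exact: eqxx.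
    rewrite gE -wE (nth_index v (ms x)); exact: nwx.
  move: out1 => /and5P [oa1 ob1 oc1 od1 _].
  move: ed1 => /and4P [eab1 ebc1 ecd1 eda1].
  exists (index a1 s), (index b1 s), (index c1 s), (index d1 s); split; first by split.
  split.
    rewrite !idx_inj; move: u1; rewrite /= !inE !negb_or !andbT -!andbA.
    done.
  split; first by split; apply: Sx.
  by rewrite !gidx.
- case: GD => S [S0 [j jn nj] Scl].
  have P : forall x p, S (index x s) -> path e x p -> S (index (last x p) s).
    move=> x p; elim: p x => [|y p IH] x //= Sx /andP [exy pth]; apply: IH pth.
    by apply: (Scl (index x s)); rewrite ?idxn // gidx.
  have := conn v (nth v s j) => /connectP [p pth lp].
  have := P v p; rewrite iv => /(_ S0 pth); rewrite -lp index_uniq ?ns //.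
  by rewrite (negbTE nj).
- case: GI => n9 [k kin [f [uf sf af hf]]].
  have idx9 : forall x, index x s < 9 by move=> x; rewrite -n9 idxn.
  have fx : forall x, nth 0 f (index x s) < 9.
    by move=> x; apply: (allP af); rewrite mem_nth // sf.
  pose F := fun x => (inord (nth 0 f (index x s)) : 'I_9).
  have Fv : forall x, val (F x) = nth 0 f (index x s) by move=> x; rewrite /F /= (inordK (fx x)).
  have Finj : injective F.
    move=> x y /(congr1 val); rewrite !Fv => /eqP; rewrite nth_uniq ?sf ?idx9 //.
    by rewrite idx_inj => /eqP.
  have cle : #|'I_9| <= #|T| by rewrite card_ord cardn n9.
  have Fbij : bijective F := inj_card_bij Finj cle.
  have Fe : forall x y, Gnat k (F x) (F y) = e x y.
    by move=> x y; rewrite !Fv -hf // gidx.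
  apply: nE4'; rewrite /in_E4.
  move: kin; rewrite !inE => /orP [/eqP kk|/orP [/eqP kk|/orP [/eqP kk|/orP [/eqP kk|/orP [/eqP kk|/eqP kk]]]]];
    subst k.
  + by right; right; right; left; exists F.
  + by right; right; right; right; left; exists F.
  + by right; right; right; right; right; left; exists F.
  + by right; right; right; right; right; right; left; exists F.
  + by right; right; right; right; right; right; right; left; exists F.
  + by right; right; right; right; right; right; right; right; exists F.
Qed.
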